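(* Let $n\ge 2$, $c\ge 1$, $\Delta>0$, and let $V'$ be a family of at most $n$ vectors in $\mathbb{R}^d$, each of Euclidean length in $[n^{-2},2\sqrt n]$, such that every vertex has expected degree at most $c$ in $G\sim\mathcal{G}_{V'}$ and the expected number of triangles in $G\sim\mathcal{G}_{V'}$ is at least $\Delta n/2$. For each integer $r$ let $V_r=\{\vec v\in V': \|\vec v\|_2\in[2^r,2^{r+1})\}$, let $R=\{r: |V_r|\ge (\Delta/60c^2)(n/\lg n)\}$, and let $V''=\bigcup_{r\in R}V_r$. Then the expected number of triangles in $G\sim\mathcal{G}_{V''}$ is at least $\Delta n/8$.
   Context: For a finite family of vectors $W=(\vec w_i)_{i\in I}$ in $\mathbb{R}^d$, $\mathcal{G}_W$ is the distribution on simple undirected graphs with vertex set $I$ in which, independently for each unordered pair $\{i,j\}$ with $i\neq j$, the edge $(i,j)$ is present with probability $\max(0,\min(\vec w_i\cdot\vec w_j,1))$. The expected degree of $i$ is $\sum_{j\ne i}\max(0,\min(\vec w_i\cdot\vec w_j,1))$. A triangle is a set of three distinct pairwise adjacent vertices. $\lg$ is the base-2 logarithm. *)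

(* Defs.v *)
From Stdlib Require Import Reals Lra ClassicalEpsilon.
Open Scope R_scope.

Fixpoint sumR (m : nat) (f : nat -> R) : R :=
  match m with
  | O => 0
  | S k => sumR k f + f k
  end.

Definition indic (P : Prop) : R :=
  if excluded_middle_informative P then 1 else 0.

(* A vector of R^d is represented by its coordinate function (coordinates 0..d-1). *)
Definition dot (d : nat) (u v : nat -> R) : R := sumR d (fun k => u k * v k).
Definition norm2 (d : nat) (u : nat -> R) : R := sqrt (dot d u u).

Definition lg (x : R) : R := ln x / ln 2.

Definition edge_prob (d : nat) (W : nat -> nat -> R) (i j : nat) : R :=
  Rmax 0 (Rmin (dot d (W i) (W j)) 1).

Definition exp_degree (d m : nat) (W : nat -> nat -> R) (i : nat) : R :=
  sumR m (fun j => indic (j <> i) * edge_prob d W i j).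

(* Expected number of triangles in G ~ G_{(W i)_{i < m, S i}}, where S selects
   the sub-family (vertex set {i < m | S i}).  By independence of the edges,
   this is the sum over 3-sets {i<j<k} of the product of the three edge
   probabilities. *)
Definition exp_triangles (d m : nat) (W : nat -> nat -> R) (S : nat -> Prop) : R :=
  sumR m (fun i => sumR m (fun j => sumR m (fun k =>
    indic ((i < j)%nat /\ (j < k)%nat /\ S i /\ S j /\ S k) *
    (edge_prob d W i j * edge_prob d W j k * edge_prob d W i k)))).

Definition in_bucket (d : nat) (W : nat -> nat -> R) (r : Z) (i : nat) : Prop :=
  powerRZ 2 r <= norm2 d (W i) < powerRZ 2 (r + 1).

(* |V_r| (counted as a sub-family, i.e. with multiplicity of indices) *)
Definition bucket_size (d m : nat) (W : nat -> nat -> R) (r : Z) : R :=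
  sumR m (fun i => indic (in_bucket d W r i)).

(* Main.v *)
Require Import Defs.
From Stdlib Require Import Reals.
From Stdlib Require Import Lra Lia ZArith Classical ClassicalEpsilon.
Open Scope R_scope.

Lemma sumR_ext m f g : (forall i, (i<m)%nat -> f i = g i) -> sumR m f = sumR m g.
Proof. induction m; simpl; intros H; auto. rewrite IHm by (intros; apply H; lia).
 rewrite H by lia. auto. Qed.

Lemma sumR_le m f g : (forall i, (i<m)%nat -> f i <= g i) -> sumR m f <= sumR m g.
Proof. induction m; simpl; intros H. lra.
 assert (H1:=H m (Nat.lt_succ_diag_r m)).
 assert (sumR m f <= sumR m g) by (apply IHm; intros; apply H; lia). lra. Qed.

Lemma sumR_plus m f g : sumR m (fun i => f i + g i) = sumR m f + sumR m g.
Proof. induction m; simpl; [lra| rewrite IHm; lra]. Qed.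

Lemma sumR_minus m f g : sumR m f - sumR m g = sumR m (fun i => f i - g i).
Proof. induction m; simpl; [lra| rewrite <- IHm; lra]. Qed.

Lemma sumR_scal m a f : sumR m (fun i => a * f i) = a * sumR m f.
Proof. induction m; simpl; [ring| rewrite IHm; ring]. Qed.

Lemma sumR_const m a : sumR m (fun _ => a) = INR m * a.
Proof. induction m; simpl sumR. simpl; ring. rewrite IHm, S_INR; ring. Qed.

Lemma sumR_zero m : sumR m (fun _ => 0) = 0.
Proof. rewrite sumR_const; ring. Qed.

Lemma sumR_swap a b (f : nat -> nat -> R) :
  sumR a (fun i => sumR b (fun j => f i j)) = sumR b (fun j => sumR a (fun i => f i j)).
Proof. induction a; simpl. symmetry; apply sumR_zero.
 rewrite IHa. rewrite <- sumR_plus. reflexivity. Qed.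

Lemma sumR_nonneg m f : (forall i, (i<m)%nat -> 0 <= f i) -> 0 <= sumR m f.
Proof. intros H. rewrite <- (sumR_zero m). apply sumR_le; auto. Qed.

Lemma sumR_ge_term m f t : (forall i, (i<m)%nat -> 0 <= f i) -> (t < m)%nat -> f t <= sumR m f.
Proof. induction m; intros H Ht. lia. simpl.
 destruct (Nat.eq_dec t m). subst.
 assert (0 <= sumR m f) by (apply sumR_nonneg; intros; apply H; lia). lra.
 assert (f t <= sumR m f) by (apply IHm; [intros; apply H; lia | lia]).
 assert (0 <= f m) by (apply H; lia). lra. Qed.

Lemma indic_true (P : Prop) : P -> indic P = 1.
Proof. intros H; unfold indic; destruct (excluded_middle_informative P); tauto. Qed.
Lemma indic_false (P : Prop) : ~ P -> indic P = 0.
Proof. intros H; unfold indic; destruct (excluded_middle_informative P); tauto. Qed.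
Lemma indic_01 (P : Prop) : 0 <= indic P <= 1.
Proof. unfold indic; destruct (excluded_middle_informative P); lra. Qed.

Lemma edge_prob_01 d W i j : 0 <= edge_prob d W i j <= 1.
Proof. unfold edge_prob. split. apply Rmax_l. apply Rmax_lub. lra. apply Rmin_r. Qed.

Lemma edge_prob_sym d W i j : edge_prob d W i j = edge_prob d W j i.
Proof. unfold edge_prob, dot. f_equal. f_equal. apply sumR_ext; intros; ring. Qed.

Ltac simpl_indic := repeat match goal with |- context [indic ?P] =>
  first [rewrite (indic_true P) by (tauto || lia) | rewrite (indic_false P) by (tauto || lia)] end.

Lemma pw i j k (V : nat -> Prop) (p : nat -> nat -> R)
  (p01 : forall x y, 0 <= p x y <= 1) (psym : forall x y, p x y = p y x) :
 indic ((i<j)%nat /\ (j<k)%nat /\ True /\ True /\ True) * (p i j * p j k * p i k)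
 - indic ((i<j)%nat /\ (j<k)%nat /\ V i /\ V j /\ V k) * (p i j * p j k * p i k)
 <= indic (~ V i) * ((indic (j<>i) * p i j) * (indic (k<>i) * p i k))
  + indic (~ V j) * ((indic (i<>j) * p j i) * (indic (k<>j) * p j k))
  + indic (~ V k) * ((indic (i<>k) * p k i) * (indic (j<>k) * p k j)).
Proof.
 rewrite (psym j i), (psym k i), (psym k j).
 pose proof (p01 i j) as HA. pose proof (p01 j k) as HB. pose proof (p01 i k) as HC.
 set (A := p i j) in *. set (B := p j k) in *. set (C := p i k) in *.
 assert (0 <= A*B) by (apply Rmult_le_pos; lra).
 assert (0 <= A*C) by (apply Rmult_le_pos; lra).
 assert (0 <= B*C) by (apply Rmult_le_pos; lra).
 assert (A*B*C <= A*C) by (assert (A*C*B <= A*C*1) by (apply Rmult_le_compat_l; lra); lra).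
 assert (A*B*C <= A*B) by (assert (A*B*C <= A*B*1) by (apply Rmult_le_compat_l; lra); lra).
 assert (A*B*C <= B*C) by (assert (B*C*A <= B*C*1) by (apply Rmult_le_compat_l; lra); lra).
 destruct (classic ((i<j)%nat /\ (j<k)%nat)) as [[h1 h2]|h].
 - destruct (classic (V i)); destruct (classic (V j)); destruct (classic (V k));
   simpl_indic; lra.
 - simpl_indic.
   pose proof (indic_01 (~ V i)). pose proof (indic_01 (~ V j)). pose proof (indic_01 (~ V k)).
   pose proof (indic_01 (j<>i)). pose proof (indic_01 (k<>i)).
   pose proof (indic_01 (i<>j)). pose proof (indic_01 (k<>j)).
   pose proof (indic_01 (i<>k)). pose proof (indic_01 (j<>k)).
   apply Rle_trans with 0; [lra|].
   repeat apply Rplus_le_le_0_compat; repeat apply Rmult_le_pos; lra.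
Qed.

Definition S3 m (F : nat -> nat -> nat -> R) :=
  sumR m (fun i => sumR m (fun j => sumR m (fun k => F i j k))).

Lemma S3_plus3 m F G H : S3 m (fun i j k => F i j k + G i j k + H i j k) = S3 m F + S3 m G + S3 m H.
Proof. unfold S3. rewrite <- !sumR_plus. apply sumR_ext; intros.
 rewrite <- !sumR_plus. apply sumR_ext; intros. rewrite <- !sumR_plus. reflexivity. Qed.

Lemma L1 m (u : nat -> R) (a : nat -> nat -> R) :
  S3 m (fun i j k => u i * (a i j * a i k)) = sumR m (fun i => u i * (sumR m (a i) * sumR m (a i))).
Proof. unfold S3. apply sumR_ext; intros i _.
 transitivity (sumR m (fun j => (u i * sumR m (a i)) * a i j)).
 apply sumR_ext; intros j _.
 replace (u i * sumR m (a i) * a i j) with ((u i * a i j) * sumR m (a i)) by ring.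
 rewrite <- sumR_scal. apply sumR_ext; intros; ring.
 rewrite sumR_scal. ring. Qed.

Lemma L2 m (u : nat -> R) (a : nat -> nat -> R) :
  S3 m (fun i j k => u j * (a j i * a j k)) = sumR m (fun i => u i * (sumR m (a i) * sumR m (a i))).
Proof. rewrite <- L1. unfold S3. rewrite sumR_swap. reflexivity. Qed.

Lemma L3 m (u : nat -> R) (a : nat -> nat -> R) :
  S3 m (fun i j k => u k * (a k i * a k j)) = sumR m (fun i => u i * (sumR m (a i) * sumR m (a i))).
Proof. rewrite <- L1. unfold S3.
 rewrite (sumR_ext m _ (fun i => sumR m (fun k => sumR m (fun j => u k * (a k i * a k j)))))
   by (intros; apply sumR_swap).
 rewrite sumR_swap. reflexivity. Qed.

Lemma bucket_exists (y : R) (a : Z) (K : nat) :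
  powerRZ 2 a <= y -> y < powerRZ 2 (a + Z.of_nat K) ->
  exists t, (t < K)%nat /\ powerRZ 2 (a + Z.of_nat t) <= y < powerRZ 2 (a + Z.of_nat t + 1).
Proof. induction K; intros H1 H2.
 - replace (a + Z.of_nat 0)%Z with a in H2 by lia. lra.
 - destruct (Rlt_or_le y (powerRZ 2 (a + Z.of_nat K))) as [h|h].
   + destruct (IHK H1 h) as [t [? ?]]. exists t; split; auto.
   + exists K. split. lia. split; auto.
     replace (a + Z.of_nat K + 1)%Z with (a + Z.of_nat (S K))%Z by lia. auto.
Qed.

Lemma powerRZ_negnat (k : nat) : powerRZ 2 (- Z.of_nat k) = / 2 ^ k.
Proof. rewrite pow_powerRZ.
 assert (E: powerRZ 2 (- Z.of_nat k) * powerRZ 2 (Z.of_nat k) = 1).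
 { rewrite <- powerRZ_add by lra. replace (- Z.of_nat k + Z.of_nat k)%Z with 0%Z by lia. reflexivity. }
 assert (powerRZ 2 (Z.of_nat k) <> 0). { rewrite <- pow_powerRZ. apply pow_nonzero. lra. }
 apply (Rmult_eq_reg_r (powerRZ 2 (Z.of_nat k))); auto. rewrite E. field; auto. Qed.

Theorem mainTheorem7 (n : nat) (c Delta : R) (d m : nat) (W : nat -> nat -> R) :
  (2 <= n)%nat -> 1 <= c -> 0 < Delta ->
  (m <= n)%nat ->
  (forall i, (i < m)%nat ->
     / (INR n ^ 2) <= norm2 d (W i) <= 2 * sqrt (INR n)) ->
  (forall i, (i < m)%nat -> exp_degree d m W i <= c) ->
  exp_triangles d m W (fun _ => True) >= Delta * INR n / 2 ->
  let Rset := fun r : Z =>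
    bucket_size d m W r >= (Delta / (60 * c ^ 2)) * (INR n / lg (INR n)) in
  let V'' := fun i : nat => exists r : Z, Rset r /\ in_bucket d W r i in
  exp_triangles d m W V'' >= Delta * INR n / 8.
Proof.
  intros Hn Hc HD Hm Hnorm Hdeg Htri Rset V''.
  set (u := fun x => indic (~ V'' x)).
  set (a := fun x y => indic (y <> x) * edge_prob d W x y).
  set (N := sumR m u).
  assert (Hloss : exp_triangles d m W (fun _ => True) - exp_triangles d m W V'' <= 3 * (c^2 * N)).
  { apply Rle_trans with (S3 m (fun i j k => u i * (a i j * a i k))
       + S3 m (fun i j k => u j * (a j i * a j k)) + S3 m (fun i j k => u k * (a k i * a k j))).
    - rewrite <- S3_plus3. unfold exp_triangles, S3. rewrite sumR_minus.
      apply sumR_le; intros i _; cbv beta. rewrite sumR_minus.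
      apply sumR_le; intros j _; cbv beta. rewrite sumR_minus.
      apply sumR_le; intros k _; cbv beta. unfold u, a; cbv beta.
      apply pw. apply edge_prob_01. apply edge_prob_sym.
    - rewrite L1, L2, L3.
      assert (sumR m (fun i => u i * (sumR m (a i) * sumR m (a i))) <= c^2 * N).
      { unfold N. rewrite <- sumR_scal. apply sumR_le; intros x hx.
        assert (Hdx: sumR m (a x) = exp_degree d m W x) by reflexivity.
        rewrite Hdx. pose proof (Hdeg x hx).
        assert (0 <= exp_degree d m W x) by (apply sumR_nonneg; intros;
          apply Rmult_le_pos; [apply indic_01|apply edge_prob_01]).
        pose proof (indic_01 (~ V'' x)). unfold u.
        assert (exp_degree d m W x * exp_degree d m W x <= c^2) by nra.
        nra. }
      lra. }
  set (thr := (Delta / (60 * c ^ 2)) * (INR n / lg (INR n))).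
  destruct (Nat.log2_up_spec n) as [HL1 HL2]; [lia|].
  pose proof (Nat.log2_up_pos n) as HL0. set (L := Nat.log2_up n) in *.
  assert (HINR2 : INR 2 = 2) by (simpl; lra).
  assert (HnL : INR n <= 2 ^ L).
  { rewrite <- HINR2, <- pow_INR. apply le_INR. lia. }
  assert (HnL' : 2 ^ pred L < INR n).
  { rewrite <- HINR2, <- pow_INR. apply lt_INR. lia. }
  assert (Hn2 : 2 <= INR n) by (rewrite <- HINR2; apply le_INR; lia).
  assert (Hln2 : 0 < ln 2) by (rewrite <- ln_1; apply ln_increasing; lra).
  assert (Hlg1 : 1 <= lg (INR n)).
  { unfold lg. destruct (Rle_lt_or_eq_dec _ _ Hn2) as [h|h].
    - pose proof (ln_increasing 2 (INR n) ltac:(lra) h).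
      apply (Rmult_le_reg_r (ln 2)); auto. field_simplify; lra.
    - rewrite <- h. field_simplify; lra. }
  assert (HlgL : INR (pred L) < lg (INR n)).
  { unfold lg. pose proof (ln_increasing (2 ^ pred L) (INR n) ltac:(apply pow_lt; lra) HnL').
    rewrite ln_pow in H by lra.
    apply (Rmult_lt_reg_r (ln 2)); auto. field_simplify; lra. }
  assert (HLp : INR L = INR (pred L) + 1) by (rewrite <- S_INR; f_equal; lia).
  set (r0 := (- Z.of_nat (2*L))%Z).
  set (K := (3*L+1)%nat).
  assert (HK : INR K = 3 * INR L + 1).
  { unfold K. rewrite plus_INR, mult_INR. simpl. lra. }
  assert (Hthr : 0 < thr).
  { unfold thr. apply Rmult_lt_0_compat. apply Rdiv_lt_0_compat; [lra|].
    assert (0 < c^2) by nra. lra. apply Rdiv_lt_0_compat; lra. }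
  assert (Hlow : forall x, (x<m)%nat -> powerRZ 2 r0 <= norm2 d (W x)).
  { intros x hx. destruct (Hnorm x hx) as [h1 _]. unfold r0. rewrite powerRZ_negnat.
    apply Rle_trans with (/ INR n ^ 2); auto.
    rewrite Nat.mul_comm, pow_mult. apply Rinv_le_contravar.
    apply pow_lt; lra. apply pow_incr; lra. }
  assert (Hup : forall x, (x<m)%nat -> norm2 d (W x) < powerRZ 2 (r0 + Z.of_nat K)).
  { intros x hx. destruct (Hnorm x hx) as [_ h2].
    replace (r0 + Z.of_nat K)%Z with (Z.of_nat (S L)) by (unfold r0, K; lia).
    rewrite <- pow_powerRZ. simpl.
    pose proof (sqrt_less (INR n) ltac:(lra) ltac:(lra)). lra. }
  assert (Hu : forall x, (x<m)%nat -> u x <= sumR K (fun t =>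
     indic (~ Rset (r0 + Z.of_nat t)%Z) * indic (in_bucket d W (r0 + Z.of_nat t)%Z x))).
  { intros x hx.
    assert (Hnn : forall t, (t < K)%nat -> 0 <= indic (~ Rset (r0 + Z.of_nat t)%Z) *
              indic (in_bucket d W (r0 + Z.of_nat t)%Z x)).
    { intros; apply Rmult_le_pos; apply indic_01. }
    destruct (classic (V'' x)) as [hv|hv].
    - unfold u. rewrite indic_false by tauto. apply sumR_nonneg; auto.
    - destruct (bucket_exists (norm2 d (W x)) r0 K (Hlow x hx) (Hup x hx)) as [t [ht hb]].
      apply Rle_trans with (indic (~ Rset (r0 + Z.of_nat t)%Z) *
              indic (in_bucket d W (r0 + Z.of_nat t)%Z x)).
      + rewrite (indic_true (in_bucket _ _ _ _)) by exact hb.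
        rewrite (indic_true (~ Rset _)).
        * unfold u. rewrite indic_true by exact hv. lra.
        * intro hR. apply hv. exists (r0 + Z.of_nat t)%Z. split; auto.
      + apply (sumR_ge_term K (fun t => indic (~ Rset (r0 + Z.of_nat t)%Z) *
              indic (in_bucket d W (r0 + Z.of_nat t)%Z x))); auto. }
  assert (HN : N <= INR K * thr).
  { apply Rle_trans with (sumR m (fun x => sumR K (fun t =>
      indic (~ Rset (r0 + Z.of_nat t)%Z) * indic (in_bucket d W (r0 + Z.of_nat t)%Z x)))).
    { apply sumR_le. exact Hu. }
    rewrite sumR_swap. rewrite <- sumR_const. apply sumR_le; intros t ht.
    rewrite sumR_scal.
    destruct (classic (Rset (r0 + Z.of_nat t)%Z)) as [h|h].
    - rewrite indic_false by tauto. lra.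
    - rewrite indic_true by exact h.
      assert (hb : ~ (bucket_size d m W (r0 + Z.of_nat t)%Z >= thr)) by exact h.
      unfold bucket_size in hb. lra. }
  set (lgn := lg (INR n)) in *.
  assert (Hc2 : 0 < c^2) by nra.
  assert (HKl : INR K <= 7.5 * lgn) by lra.
  assert (Hprod : lgn * thr = Delta * INR n / (60 * c^2)).
  { unfold thr. field. split; lra. }
  assert (INR K * thr <= 7.5 * lgn * thr) by (apply Rmult_le_compat_r; lra).
  assert (c^2 * N <= c^2 * (7.5 * lgn * thr)) by (apply Rmult_le_compat_l; lra).
  assert (c^2 * (7.5 * lgn * thr) = 7.5 * Delta * INR n / 60).
  { replace (c^2 * (7.5 * lgn * thr)) with (7.5 * c^2 * (lgn * thr)) by ring.
    rewrite Hprod. field. lra. }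
  lra.
Qed.
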